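(* Assume $\langle f\rangle_X=0$ and that $\psi$ satisfies (A1) and (A2), let $u^H$ be the solution of the HQC problem and $u^{H,c}$ its reconstruction. Then for every $k$ and every $X_i\in S_k$, \[ u^{H,c}(X_i)=u^H(X_i)+\epsilon\,\chi(X_{i_k^{\rm coll}},X_i/\epsilon)\,Du^H(X_i). \]
   Context: Let $\epsilon>0$, $N,p$ positive integers, $N\epsilon=1$; $X_i=\epsilon i$, $Y_j=j$. $U^N_{\rm per}(\epsilon\mathbb Z)$: functions $u:\epsilon\mathbb Z\to\mathbb R$ with $u(X_{i+N})=u(X_i)$; $U^N_\#(\epsilon\mathbb Z)$: those with $\langle u\rangle_X:=\frac1N\sum_{i=1}^Nu(X_i)=0$. $\langle u,v\rangle_X=\frac1N\sum_{i=1}^Nu(X_i)v(X_i)$, $Du(X_i)=(u(X_{i+1})-u(X_i))/\epsilon$. $U^p_\#(\epsilon\mathbb Z)$: $p$-periodic functions on $\epsilon\mathbb Z$ with $\sum_{i=1}^pw(X_i)=0$. Two-scale functions $g:\epsilon\mathbb Z\times\mathbb Z\to\mathbb R$ satisfy $g(X_{i+N},Y_j)=g(X_i,Y_j)=g(X_i,Y_{j+p})$; $D_Xg(X_i,Y_j)=(g(X_{i+1},Y_j)-g(X_i,Y_j))/\epsilon$, $D_Yg(X_i,Y_j)=g(X_i,Y_{j+1})-g(X_i,Y_j)$, $\|g\|_{L^\infty(N,p)}=\max_{1\le i\le N,1\le j\le p}|g|$. $\psi$ is a two-scale function with (A1) $0<c_\psi\le\psi\le C_\psi$ and (A2) $\|D_X\psi\|_{L^\infty(N,p)}\le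 C'_\psi$. The cell solution $\chi$ is the two-scale function with $\frac1p\sum_{j=1}^p\chi(X_i,Y_j)=0$ and $-D_Y(\psi D_Y\chi)=D_Y\psi$ everywhere. $f\in U^N_{\rm per}(\epsilon\mathbb Z)$. HQC method: indices $1=i_1<\dots<i_K\le N$, $i_{K+1}=N+1$, $S_k=\{X_i:i_k\le i<i_{k+1}\}$, $H_k=\epsilon(i_{k+1}-i_k)$. $U^H_{\rm per}$: $v\in U^N_{\rm per}(\epsilon\mathbb Z)$ affine on each $\{X_i:i_k\le i\le i_{k+1}\}$; $U^H_\#=U^H_{\rm per}\cap U^N_\#(\epsilon\mathbb Z)$. Sampling domains $S_k^{\rm rep}=\{X_i:i_k^{\rm rep}\le i<i_k^{\rm rep}+p\}\subset S_k$, collocation indices with $X_{i_k^{\rm coll}}\in S_k^{\rm rep}$, $\psi^\epsilon_{{\rm coll},k}(X_i)=\psi(X_{i_k^{\rm coll}},X_i/\epsilon)$, $\langle a,b\rangle_{S_k^{\rm rep}}=\frac1p\sum_{X_i\in S_k^{\rm rep}}a(X_i)b(X_i)$. For $v^H\in U^H_{\rm per}$ let $\ell_k$ be the affine function on $\epsilon\mathbb Z$ equal to $v^H$ on $S_k$; $\mathcal R_k(v^H)=\ell_k+w_k$ with $w_k\in U^p_\#(\epsilon\mathbb Z)$ such that $\langle\psi^\epsilon_{{\rm coll},k}D(\ell_k+w_k),Ds\rangle_{S_k^{\rm rep}}=0$ for all $s\in U^p_\#(\epsilon\mathbb Z)$. HQC problem: $u^H\in U^H_\#$ with $\sum_{k=1}^KH_k\langle\psi^\epsilon_{{\rm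 coll},k}D\mathcal R_k(u^H),D\mathcal R_k(v^H)\rangle_{S_k^{\rm rep}}=\langle f,v^H\rangle_X$ for all $v^H\in U^H_\#$. The reconstruction is $u^{H,c}(X_i)=u^H(X_i)+w_k(X_i)$ for $X_i\in S_k$, with $w_k=\mathcal R_k(u^H)-\ell_k$ computed for $u^H$. *)

(* Defs.v *)
(* Indices: a function u on eps*Z is represented by
   u : int -> R with u i = u(X_i); a two-scale function g by
   g : int -> int -> R with g i j = g(X_i, Y_j). Since Y_j = j and
   X_i / eps = i, psi(X_a, X_i/eps) is  psi a i. *)
From mathcomp Require Import all_boot all_order all_algebra.
Set Implicit Arguments. Unset Strict Implicit. Unset Printing Implicit Defensive.
Import Order.TTheory GRing.Theory Num.Theory.
Local Open Scope ring_scope.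

Definition eps {R : realFieldType} (N : nat) : R := (N%:R)^-1.

Definition Dd {R : realFieldType} (N : nat) (u : int -> R) (i : int) : R :=
  (u (i + 1) - u i) / eps N.

Definition periodic {R : realFieldType} (n : nat) (u : int -> R) : Prop :=
  forall i : int, u (i + n%:Z) = u i.

Definition meanX {R : realFieldType} (N : nat) (u : int -> R) : R :=
  (N%:R)^-1 * \sum_(m < N) u (m.+1)%:Z.

Definition innerX {R : realFieldType} (N : nat) (u v : int -> R) : R :=
  (N%:R)^-1 * \sum_(m < N) u (m.+1)%:Z * v (m.+1)%:Z.

Definition UNper {R : realFieldType} (N : nat) (u : int -> R) : Prop := periodic N u.
Definition UNsharp {R : realFieldType} (N : nat) (u : int -> R) : Prop :=
  periodic N u /\ meanX N u = 0.

Definition Upsharp {R : realFieldType} (p : nat) (w : int -> R) : Prop :=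
  periodic p w /\ \sum_(m < p) w (m.+1)%:Z = 0.

Definition twoscale {R : realFieldType} (N p : nat) (g : int -> int -> R) : Prop :=
  forall i j : int, g (i + N%:Z) j = g i j /\ g i (j + p%:Z) = g i j.

Definition DX {R : realFieldType} (N : nat) (g : int -> int -> R) (i j : int) : R :=
  (g (i + 1) j - g i j) / eps N.
Definition DY {R : realFieldType} (g : int -> int -> R) (i j : int) : R :=
  g i (j + 1) - g i j.

Definition Linf_le {R : realFieldType} (N p : nat) (g : int -> int -> R) (C : R) : Prop :=
  forall i j : int, (1 <= i <= N%:Z)%R -> (1 <= j <= p%:Z)%R -> `|g i j| <= C.

Definition affine_on {R : realFieldType} (a b : int) (v : int -> R) : Prop :=
  forall i : int, (a <= i <= b)%R ->
    v i = v a + ((i - a)%:~R / (b - a)%:~R) * (v b - v a).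

(* Coarse mesh: 0-based blocks k = 0..K-1 (paper's k = 1..K),
   ik k = i_{k+1} in the paper's numbering, ik K = N+1. *)
Definition mesh (N K : nat) (ik : nat -> int) : Prop :=
  (0 < K)%N /\ ik 0%N = 1 /\ (forall k, (k < K)%N -> (ik k < ik k.+1)%R) /\ ik K = N%:Z + 1.

Definition inS (ik : nat -> int) (k : nat) (i : int) : bool :=
  (ik k <= i)%R && (i < ik k.+1)%R.

Definition Hk {R : realFieldType} (N : nat) (ik : nat -> int) (k : nat) : R :=
  eps N * (ik k.+1 - ik k)%:~R.

Definition UHper {R : realFieldType} (N K : nat) (ik : nat -> int) (v : int -> R) : Prop :=
  UNper N v /\ forall k, (k < K)%N -> affine_on (ik k) (ik k.+1) v.
Definition UHsharp {R : realFieldType} (N K : nat) (ik : nat -> int) (v : int -> R) : Prop :=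
  UHper N K ik v /\ meanX N v = 0.

Definition ellk {R : realFieldType} (ik : nat -> int) (k : nat) (v : int -> R) : int -> R :=
  fun i => v (ik k) + ((i - ik k)%:~R / (ik k.+1 - ik k)%:~R) * (v (ik k.+1) - v (ik k)).

(* sampling domains S_k^rep = {X_i : irep k <= i < irep k + p}, collocation index *)
Definition sampling (p K : nat) (ik irep icoll : nat -> int) : Prop :=
  forall k, (k < K)%N ->
    [/\ (ik k <= irep k)%R, (irep k + p%:Z <= ik k.+1)%R,
        (irep k <= icoll k)%R & (icoll k < irep k + p%:Z)%R].

Definition innerRep {R : realFieldType} (p : nat) (irep : nat -> int) (k : nat)
  (a b : int -> R) : R :=
  (p%:R)^-1 * \sum_(m < p) a (irep k + m%:Z) * b (irep k + m%:Z).

Definition psicoll {R : realFieldType} (psi : int -> int -> R) (icoll : nat -> int)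
  (k : nat) : int -> R := fun i => psi (icoll k) i.

(* w is the corrector w_k of R_k(v) = ell_k + w_k *)
Definition is_corrector {R : realFieldType} (N p : nat) (psi : int -> int -> R)
  (ik irep icoll : nat -> int) (k : nat) (v w : int -> R) : Prop :=
  Upsharp p w /\
  forall s : int -> R, Upsharp p s ->
    innerRep p irep k
      (fun i => psicoll psi icoll k i * Dd N (fun x => ellk ik k v x + w x) i)
      (Dd N s) = 0.

(* u^H solves the HQC problem (R_k(.) expressed through its correctors) *)
Definition is_HQC_solution {R : realFieldType} (N p K : nat) (psi : int -> int -> R)
  (ik irep icoll : nat -> int) (f uH : int -> R) : Prop :=
  UHsharp N K ik uH /\
  forall v : int -> R, UHsharp N K ik v ->
  forall wu wv : nat -> int -> R,
    (forall k, (k < K)%N -> is_corrector N p psi ik irep icoll k uH (wu k)) ->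
    (forall k, (k < K)%N -> is_corrector N p psi ik irep icoll k v (wv k)) ->
    \sum_(k < K) Hk N ik k *
       innerRep p irep k
         (fun i => psicoll psi icoll k i * Dd N (fun x => ellk ik k uH x + wu k x) i)
         (Dd N (fun x => ellk ik k v x + wv k x))
    = innerX N f v.

Definition is_cell_solution {R : realFieldType} (N p : nat) (psi chi : int -> int -> R) : Prop :=
  twoscale N p chi /\
  (forall i : int, (p%:R)^-1 * \sum_(m < p) chi i (m.+1)%:Z = 0) /\
  (forall i j : int, - DY (fun a b => psi a b * DY chi a b) i j = DY psi i j).

Definition recon {R : realFieldType} (uH : int -> R) (w : nat -> int -> R) (k : nat) (i : int) : R :=
  uH i + w k i.

(* Main.v *)
Require Import Defs.
From mathcomp Require Import all_boot all_order all_algebra ring lra zify.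
Import Order.TTheory GRing.Theory Num.Theory.
Local Open Scope ring_scope.

Lemma per_mul (R : realFieldType) (p : nat) (d : int -> R) :
  periodic p d -> forall x (q : int), d (x + q * p%:Z) = d x.
Proof.
move=> Hp x q.
have Hn : forall (n : nat) y, d (y + n%:Z * p%:Z) = d y.
  elim=> [|n IH] y; first by rewrite mul0r addr0.
  by rewrite -[n.+1]addn1 PoszD mulrDl mul1r addrA Hp IH.
case: q => n; first exact: Hn.
rewrite NegzE mulNr.
have := Hn n.+1 (x - n.+1%:Z * p%:Z); rewrite subrK => E.
by rewrite [RHS]E.
Qed.

Lemma const_from_step (R : realFieldType) (p : nat) (d : int -> R) (r : int) :
  (0 < p)%N -> periodic p d ->
  (forall m, (m < p)%N -> d (r + m%:Z + 1) = d (r + m%:Z)) ->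
  forall j, d j = d r.
Proof.
move=> p0 Hp Hs.
have Hm : forall m, (m <= p)%N -> d (r + m%:Z) = d r.
  elim=> [|m IH] Hmp; first by rewrite addr0.
  by rewrite -[m.+1]addn1 PoszD addrA Hs // IH // ltnW.
move=> j.
have pz : (p%:Z != 0) by rewrite eqz_nat -lt0n.
have Ej : j = r + ((j - r) %% p%:Z)%Z + ((j - r) %/ p%:Z)%Z * p%:Z.
  by rewrite [X in j = X]addrAC -addrA -divz_eq addrC subrK.
rewrite Ej per_mul //.
have m0 := modz_ge0 (j - r) pz.
have m1 : (((j - r) %% p%:Z)%Z < p%:Z) by apply: ltz_pmod; rewrite ltz_nat.
rewrite -(gez0_abs m0) Hm //.
apply: ltnW; by rewrite -ltz_nat gez0_abs.
Qed.

Lemma ellk_diff (R : realFieldType) ik k (v : int -> R) j :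
  ellk ik k v (j+1) - ellk ik k v j = (v (ik k.+1) - v (ik k)) / (ik k.+1 - ik k)%:~R.
Proof. rewrite /ellk. rewrite -[j + 1 - _]addrAC intrD. ring. Qed.

Lemma sum_Dd (R : realFieldType) N (d : int -> R) r n :
  \sum_(m < n) Dd N d (r + m%:Z) = (d (r + n%:Z) - d r) / eps N.
Proof.
elim: n => [|n IH]; first by rewrite big_ord0 addr0 subrr mul0r.
rewrite big_ord_recr /= IH /Dd -[n.+1]addn1 PoszD addrA. ring.
Qed.

Theorem lemma6p5 (R : realFieldType) (N p K : nat)
  (psi chi : int -> int -> R) (c_psi C_psi C'_psi : R)
  (f uH : int -> R) (ik irep icoll : nat -> int) (w : nat -> int -> R) :
  (0 < N)%N -> (0 < p)%N ->
  twoscale N p psi ->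
  (0 < c_psi) ->
  (forall i j, c_psi <= psi i j <= C_psi) ->
  Linf_le N p (DX N psi) C'_psi ->
  is_cell_solution N p psi chi ->
  UNper N f -> meanX N f = 0 ->
  mesh N K ik -> sampling p K ik irep icoll ->
  is_HQC_solution N p K psi ik irep icoll f uH ->
  (forall k, (k < K)%N -> is_corrector N p psi ik irep icoll k uH (w k)) ->
  forall k, (k < K)%N -> forall i : int, inS ik k i ->
    recon uH w k i = uH i + eps N * chi (icoll k) i * Dd N uH i.
Proof.
move=> N0 p0 Hpsi cpos Hb _ [Hchi [Hmean Hcell]] _ _ _ _ [[[_ Haff] _] _] Hw k kK i Hi.
rewrite /recon.
set a0 := ik k; set b := ik k.+1; set a := icoll k; set r := irep k.
have eN : eps N != 0 :> R by rewrite /eps invr_eq0 pnatr_eq0 -lt0n.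
have pN : (p%:R : R) != 0 by rewrite pnatr_eq0 -lt0n.
move: Hi; rewrite /inS -/a0 -/b => /andP [Hi1 Hi2].
have hba : (b - a0)%:~R != 0 :> R.
  by rewrite intr_eq0 subr_eq0 gt_eqF // (le_lt_trans Hi1 Hi2).
set G := (uH b - uH a0) / (b - a0)%:~R / eps N.
have DuH : Dd N uH i = G.
  have E : uH (i+1) - uH i = ellk ik k uH (i+1) - ellk ik k uH i.
    rewrite /ellk -/a0 -/b -!(Haff k kK) //.
      by rewrite Hi1 ltW.
    by rewrite (le_trans Hi1 (lerDl _ 1)) /= -ltzD1 ltrD2r.
  by rewrite /Dd E ellk_diff.
set w0 := fun j => eps N * chi a j * G.
have Dw0 : forall j, Dd N (fun x => ellk ik k uH x + w0 x) j = G * (1 + DY chi a j).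
  move=> j; rewrite /Dd /DY /w0.
  transitivity ((ellk ik k uH (j+1) - ellk ik k uH j) / eps N + (chi a (j+1) - chi a j) * G).
    by field.
  rewrite ellk_diff /G -/a0 -/b. ring.
set F := fun j => psi a j * (1 + DY chi a j).
have FS : forall j, F (j + 1) = F j.
  move=> j; have := Hcell a j; rewrite /F /DY => H. lra.
have FR : forall m : nat, F (r + m%:Z) = F r.
  elim=> [|m IH]; first by rewrite addr0.
  by rewrite -[m.+1]addn1 PoszD addrA FS.
set d := fun j => w k j - w0 j.
have [[wper wsum] worth] := Hw k kK.
have chisum : \sum_(m < p) chi a (m.+1)%:Z = 0.
  by move/eqP: (Hmean a); rewrite mulf_eq0 invr_eq0 (negbTE pN) /= => /eqP.
have Hd : Upsharp p d.
  split.
    by move=> j; rewrite /d /w0 wper (proj2 (Hchi a j)).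
  rewrite /d sumrB wsum /w0.
  under eq_bigr do rewrite mulrAC.
  by rewrite -mulr_sumr chisum mulr0 subrr.
have E1 := worth d Hd.
have E0 : \sum_(m < p) psicoll psi icoll k (r + m%:Z) *
            Dd N (fun x => ellk ik k uH x + w0 x) (r + m%:Z) * Dd N d (r + m%:Z) = 0.
  rewrite (eq_bigr (fun m : 'I_p => G * F r * Dd N d (r + m%:Z))) => [|m _].
    by rewrite -mulr_sumr sum_Dd (proj1 Hd) subrr mul0r mulr0.
  rewrite Dw0 /psicoll -/a -(FR m) /F; ring.
have S : \sum_(m < p) psi a (r + m%:Z) * (Dd N d (r + m%:Z))^+2 = 0.
  move: E1; rewrite /innerRep -/r => /eqP; rewrite mulf_eq0 invr_eq0 (negbTE pN) /= => /eqP E1.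
  have := congr2 (fun x y => x - y) E1 E0; rewrite subrr -sumrB => H; rewrite -[RHS]H.
  apply: eq_bigr => m _; rewrite /psicoll -/a /d /Dd; ring.
have Dd0 : forall m, (m < p)%N -> d (r + m%:Z + 1) = d (r + m%:Z).
  have pos : forall m : 'I_p, xpredT m -> 0 <= psi a (r + m%:Z) * (Dd N d (r + m%:Z))^+2.
    move=> m' _; apply: mulr_ge0; last exact: sqr_ge0.
    by have := Hb a (r + m'%:Z); move=> /andP [H1 _]; lra.
  move=> m mp.
  have := @psumr_eq0P _ _ xpredT (fun m : 'I_p => psi a (r + m%:Z) * (Dd N d (r + m%:Z))^+2) pos S (Ordinal mp) isT.
  rewrite /= => /eqP; rewrite mulf_eq0 sqrf_eq0 => /orP [|].
    by have := Hb a (r + m%:Z); move=> /andP [H1 _] /eqP H; move: H1; rewrite H; lra.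
  rewrite /Dd mulf_eq0 invr_eq0 (negbTE eN) orbF subr_eq0 => /eqP //.
have dc := @const_from_step _ _ _ _ p0 (proj1 Hd) Dd0.
have dr0 : d r = 0.
  have := proj2 Hd; under eq_bigr do rewrite dc.
  rewrite sumr_const card_ord -mulr_natr => /eqP; rewrite mulf_eq0 (negbTE pN) orbF.
  by move/eqP.
have : d i = 0 by rewrite dc.
rewrite /d /w0 DuH => /eqP; rewrite subr_eq0 => /eqP ->.
by [].
Qed.
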